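(* Let $G=(U,V,E)$ be a path-restricted ordered bipartite graph and let $x$ be a vertex of $G$. Two forward paths starting at $x$ in the same direction (both with increasing orders, or both with decreasing orders) never meet again: if both reach a common vertex $y\neq x$, then their subpaths from $x$ to $y$ coincide.
   Context: An ordered bipartite graph is $G=(U,V,E)$ where $U,V$ are disjoint finite sets, each carrying a strict total order (both written $<$), and $E\subseteq U\times V$. A path is a sequence of edges in which consecutive edges share a vertex. A path visiting the vertices of $U$ in the order $u_1,\dots,u_k$ and those of $V$ in the order $v_1,\dots,v_l$ is a forward path if either $u_1<\dots<u_k$ and $v_1<\dots<v_l$, or $u_1>\dots>u_k$ and $v_1>\dots>v_l$. For $x\le y$ in $U$ write $\langle x,y\rangle=\{u\in U: x\le u\le y\}$, and similarly in $V$. If $u_a<u_b$ are the smallest and largest $U$-vertices and $v_c<v_d$ the smallest and largest $V$-vertices of a forward path $P$, the range of $P$ is $\{\langle u_a,u_b\rangle,\langle v_c,v_d\rangle\}$. A vertex of $P$ is non-terminal if it is adjacent along $P$ to two vertices of $P$. An edge is a back edge to $P$ if either it is $(u_a,v_j)$ with $v_j\in\langle v_c,v_d\rangle$ and $v_j>v'$ for some non-terminal vertex $v'\in V$ of $P$, or it is $(u_i,v_c)$ with $u_i\in\langle u_a,u_b\rangle$ and $u_i>u'$ for some non-terminal vertex $u'\in U$ of $P$. $G$ is a path-restricted ordered bipartite graph (PRBG) if no forward path in $G$ has a back edge in $E$. *)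

(* Defs.v *)
(* Ordered bipartite graphs: U = 'I_m, V = 'I_n with their
   natural strict orders (any finite strict total order is isomorphic to an
   ordinal), edges E : U -> V -> bool. *)
From mathcomp Require Import all_boot all_order.
Set Implicit Arguments. Unset Strict Implicit. Unset Printing Implicit Defensive.

Section OBG.
Variables (m n : nat) (E : 'I_m -> 'I_n -> bool).

Definition vert := ('I_m + 'I_n)%type.

Definition getU (w : vert) : option 'I_m := if w is inl u then Some u else None.
Definition getV (w : vert) : option 'I_n := if w is inr v then Some v else None.

Definition adj (x y : vert) : bool :=
  match x, y with
  | inl u, inr v => E u v
  | inr v, inl u => E u v
  | _, _ => false
  end.

Definition is_path (P : seq vert) : bool :=
  if P is x :: s then (0 < size s) && path adj x s else false.

Definition Uvs (P : seq vert) : seq 'I_m := pmap getU P.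
Definition Vvs (P : seq vert) : seq 'I_n := pmap getV P.

Definition forward_dir (inc : bool) (P : seq vert) : bool :=
  is_path P &&
  (if inc then sorted (fun a b : 'I_m => a < b) (Uvs P)
               && sorted (fun a b : 'I_n => a < b) (Vvs P)
   else sorted (fun a b : 'I_m => b < a) (Uvs P)
               && sorted (fun a b : 'I_n => b < a) (Vvs P)).

Definition forward_path (P : seq vert) : bool :=
  forward_dir true P || forward_dir false P.

(* w is non-terminal in P: adjacent along P to two vertices of P *)
Definition nonterminal (P : seq vert) (w : vert) : Prop :=
  exists i, 0 < i /\ i.+1 < size P /\ nth w P i = w.

Definition minU (P : seq vert) (ua : 'I_m) : Prop :=
  ua \in Uvs P /\ forall u, u \in Uvs P -> ua <= u.
Definition maxU (P : seq vert) (ub : 'I_m) : Prop :=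
  ub \in Uvs P /\ forall u, u \in Uvs P -> u <= ub.
Definition minV (P : seq vert) (vc : 'I_n) : Prop :=
  vc \in Vvs P /\ forall v, v \in Vvs P -> vc <= v.
Definition maxV (P : seq vert) (vd : 'I_n) : Prop :=
  vd \in Vvs P /\ forall v, v \in Vvs P -> v <= vd.

Definition back_edge (P : seq vert) (u : 'I_m) (v : 'I_n) : Prop :=
  (exists ua vc vd, [/\ minU P ua, minV P vc, maxV P vd, u = ua &
      (vc <= v <= vd) /\
      exists v' : 'I_n, nonterminal P (inr v') /\ v' < v])
  \/
  (exists ua ub vc, [/\ minU P ua, maxU P ub, minV P vc, v = vc &
      (ua <= u <= ub) /\
      exists u' : 'I_m, nonterminal P (inl u') /\ u' < u]).

Definition PRBG : Prop :=
  forall P, forward_path P -> forall u v, E u v -> ~ back_edge P u v.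

End OBG.

(* Main.v *)
Require Import Defs.
From mathcomp Require Import all_boot all_order.
Set Implicit Arguments. Unset Strict Implicit. Unset Printing Implicit Defensive.

Lemma path_min_gen (T : eqType) (r : rel T) : transitive r ->
  forall x s, path r x s -> forall y, y \in s -> r x y.
Proof. by move=> tr x s /(order_path_min tr) /allP. Qed.

Lemma ltr_trans k : transitive (fun a b : 'I_k => a < b).
Proof. by move=> y x z; apply: ltn_trans. Qed.
Lemma gtr_trans k : transitive (fun a b : 'I_k => b < a).
Proof. by move=> y x z h1 h2; apply: ltn_trans h2 h1. Qed.

Lemma sorted_head k (x : 'I_k) t : sorted (fun a b : 'I_k => a < b) (x :: t) ->
  x \in x :: t /\ forall z, z \in x :: t -> x <= z.
Proof.
move=> h; split; first by rewrite mem_head.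
move=> z; rewrite in_cons => /orP [/eqP -> //| zt].
by apply: ltnW; apply: (path_min_gen (@ltr_trans k) h).
Qed.

Lemma sorted_last k (y : 'I_k) t : sorted (fun a b : 'I_k => a < b) (rcons t y) ->
  y \in rcons t y /\ forall z, z \in rcons t y -> z <= y.
Proof.
rewrite -rev_sorted rev_rcons /= => h; split; first by rewrite mem_rcons mem_head.
move=> z; rewrite mem_rcons in_cons => /orP [/eqP -> //| zt].
apply: ltnW; apply: (path_min_gen (@gtr_trans k) h); by rewrite mem_rev.
Qed.

Lemma sorted_max k (s : seq 'I_k) : sorted (fun a b : 'I_k => a < b) s -> s <> [::] ->
  exists y, y \in s /\ forall z, z \in s -> z <= y.
Proof.
case/lastP: s => [|t y] // h _; exists y; exact: sorted_last.
Qed.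

Section G.
Variables (m n : nat) (E : 'I_m -> 'I_n -> bool).

Lemma UvsR (s : seq (vert m n)) u : Uvs (rcons s (inl u)) = rcons (Uvs s) u.
Proof. by rewrite /Uvs -cats1 pmap_cat -cats1. Qed.
Lemma VvsR (s : seq (vert m n)) v : Vvs (rcons s (inr v)) = rcons (Vvs s) v.
Proof. by rewrite /Vvs -cats1 pmap_cat -cats1. Qed.

Lemma memV (s : seq (vert m n)) v : inr v \in s -> v \in Vvs s.
Proof.
elim: s => // w s IH; rewrite in_cons => /orP [/eqP <-|/IH]; first by rewrite /Vvs /= mem_head.
by case: w => [u|v'] h; rewrite /Vvs /= ?in_cons ?h ?orbT.
Qed.
Lemma memU (s : seq (vert m n)) u : inl u \in s -> u \in Uvs s.
Proof.
elim: s => // w s IH; rewrite in_cons => /orP [/eqP <-|/IH]; first by rewrite /Uvs /= mem_head.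
by case: w => [u'|v'] h; rewrite /Uvs /= ?in_cons ?h ?orbT.
Qed.

End G.

Section G2.
Variables (m n : nat) (E : 'I_m -> 'I_n -> bool).

Lemma fwdE (P : seq (vert m n)) : forward_dir E true P =
  [&& is_path E P, sorted (fun a b : 'I_m => a < b) (Uvs P) & sorted (fun a b : 'I_n => a < b) (Vvs P)].
Proof. by []. Qed.

Lemma divU u0 a1 b1 A B : PRBG E ->
  forward_dir E true [:: inl u0, inr a1 & A] -> forward_dir E true [:: inl u0, inr b1 & B] ->
  a1 < b1 -> last (inr a1) A = last (inr b1) B -> False.
Proof.
move=> prbg fA fB ab eql.
have := fA; rewrite fwdE => /and3P [pA sUA sVA].
have := fB; rewrite fwdE => /and3P [pB sUB sVB].
have [vd [vdin vdmax]] : exists vd, vd \in Vvs [:: inl u0, inr a1 & A] /\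
     forall z, z \in Vvs [:: inl u0, inr a1 & A] -> z <= vd.
  apply: (sorted_max sVA); by rewrite /Vvs.
have Eub : E u0 b1.
  by move: pB => /= /andP [].
case: (leqP b1 vd) => hb.
- have An : A <> [::].
    move=> A0; move: vdin hb; rewrite A0 /Vvs /= in_cons orbF => /eqP ->.
    by rewrite leqNgt ab.
  case: A An fA vdin vdmax {pA sUA sVA eql} => // x2 A' _ fA vdin vdmax.
  apply: (prbg [:: inl u0, inr a1, x2 & A'] _ u0 b1 Eub); first by rewrite /forward_path fA.
  left; exists u0, a1, vd; split => //.
  + by apply: sorted_head; move: fA; rewrite fwdE => /and3P [].
  + by apply: sorted_head; move: fA; rewrite fwdE => /and3P [].
  + split; first by rewrite hb andbT ltnW.
    by exists a1; split => //; exists 1.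
- have qA : last (inr a1) A \in [:: inl u0, inr a1 & A] by rewrite in_cons mem_last orbT.
  have qB : last (inr b1) B \in [:: inl u0, inr b1 & B] by rewrite in_cons mem_last orbT.
  rewrite eql in qA.
  case hq: (last (inr b1) B) qA qB => [uq|v] qA qB; last first.
    have h1 := vdmax _ (memV qA).
    have [_ h2] := sorted_head sVB; have := h2 _ (memV qB).
    by rewrite leqNgt (leq_ltn_trans h1 hb).
  have eUA : Uvs [:: inl u0, inr a1 & A] = rcons (Uvs (belast (inl u0) (inr a1 :: A))) uq.
    by rewrite {1}(lastI (inl u0) (inr a1 :: A)) /= eql hq UvsR.
  have eUB : Uvs [:: inl u0, inr b1 & B] = rcons (Uvs (belast (inl u0) (inr b1 :: B))) uq.
    by rewrite {1}(lastI (inl u0) (inr b1 :: B)) /= hq UvsR.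
  clear qA; case: A fA pA sUA sVA vdin vdmax eql eUA => [|x2 A'] fA pA sUA sVA vdin vdmax eql eUA.
    by move: eql; rewrite /= hq.
  case: x2 fA pA sUA sVA vdin vdmax eql eUA => [a2|v2] fA pA sUA sVA vdin vdmax eql eUA; last first.
    by move: pA => /=; rewrite andbF.
  have Ea : E a2 a1 by move: pA => /= /and3P [].
  have Eu0a1 : E u0 a1 by move: pA => /= /and3P [].
  have fB' : forward_dir E true [:: inr a1, inl u0, inr b1 & B].
    rewrite fwdE; apply/and3P; split => //.
    by move: pB; rewrite /is_path /= Eu0a1.
    by move: sVB; rewrite /Vvs /= ab.
  apply: (prbg [:: inr a1, inl u0, inr b1 & B] _ a2 a1 Ea); first by rewrite /forward_path fB'.
  have u0a2 : u0 < a2 by move: sUA => /= /andP [].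
  have a2uq : a2 <= uq.
    move: sUA; rewrite eUA => /sorted_last [_]; apply; rewrite -eUA /Uvs /= !in_cons eqxx.
    by rewrite orbT.
  right; exists u0, uq, a1; split => //.
  + by move: (sorted_head sUB).
  + rewrite /maxU; have -> : Uvs [:: inr a1, inl u0, inr b1 & B] = Uvs [:: inl u0, inr b1 & B] by [].
    by rewrite eUB; apply: sorted_last; rewrite -eUB.
  + by apply: sorted_head; move: fB'; rewrite fwdE => /and3P [].
  + split; first by rewrite a2uq ltnW.
    by exists u0; split => //; exists 1.
Qed.
End G2.

Section G3.
Variables (m n : nat) (E : 'I_m -> 'I_n -> bool).

Lemma divV v0 a1 b1 A B : PRBG E ->
  forward_dir E true [:: inr v0, inl a1 & A] -> forward_dir E true [:: inr v0, inl b1 & B] ->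
  a1 < b1 -> last (inl a1) A = last (inl b1) B -> False.
Proof.
move=> prbg fA fB ab eql.
have := fA; rewrite fwdE => /and3P [pA sUA sVA].
have := fB; rewrite fwdE => /and3P [pB sUB sVB].
have [vd [vdin vdmax]] : exists vd, vd \in Uvs [:: inr v0, inl a1 & A] /\
     forall z, z \in Uvs [:: inr v0, inl a1 & A] -> z <= vd.
  apply: (sorted_max sUA); by rewrite /Uvs.
have Eub : E b1 v0 by move: pB => /= /andP [].
case: (leqP b1 vd) => hb.
- have An : A <> [::].
    move=> A0; move: vdin hb; rewrite A0 /Uvs /= in_cons orbF => /eqP ->.
    by rewrite leqNgt ab.
  case: A An fA vdin vdmax {pA sUA sVA eql} => // x2 A' _ fA vdin vdmax.
  apply: (prbg [:: inr v0, inl a1, x2 & A'] _ b1 v0 Eub); first by rewrite /forward_path fA.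
  right; exists a1, vd, v0; split => //.
  + by apply: sorted_head; move: fA; rewrite fwdE => /and3P [].
  + by apply: sorted_head; move: fA; rewrite fwdE => /and3P [].
  + split; first by rewrite hb andbT ltnW.
    by exists a1; split => //; exists 1.
- have qA : last (inl a1) A \in [:: inr v0, inl a1 & A] by rewrite in_cons mem_last orbT.
  have qB : last (inl b1) B \in [:: inr v0, inl b1 & B] by rewrite in_cons mem_last orbT.
  rewrite eql in qA.
  case hq: (last (inl b1) B) qA qB => [v|uq] qA qB.
    have h1 := vdmax _ (memU qA).
    have [_ h2] := sorted_head sUB; have := h2 _ (memU qB).
    by rewrite leqNgt (leq_ltn_trans h1 hb).
  have eUA : Vvs [:: inr v0, inl a1 & A] = rcons (Vvs (belast (inr v0) (inl a1 :: A))) uq.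
    by rewrite {1}(lastI (inr v0) (inl a1 :: A)) /= eql hq VvsR.
  have eUB : Vvs [:: inr v0, inl b1 & B] = rcons (Vvs (belast (inr v0) (inl b1 :: B))) uq.
    by rewrite {1}(lastI (inr v0) (inl b1 :: B)) /= hq VvsR.
  clear qA; case: A fA pA sUA sVA vdin vdmax eql eUA => [|x2 A'] fA pA sUA sVA vdin vdmax eql eUA.
    by move: eql; rewrite /= hq.
  case: x2 fA pA sUA sVA vdin vdmax eql eUA => [u2|a2] fA pA sUA sVA vdin vdmax eql eUA.
    by move: pA => /=; rewrite andbF.
  have Ea : E a1 a2 by move: pA => /= /and3P [].
  have Eu0a1 : E a1 v0 by move: pA => /= /and3P [].
  have fB' : forward_dir E true [:: inl a1, inr v0, inl b1 & B].
    rewrite fwdE; apply/and3P; split => //.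
    by move: pB; rewrite /is_path /= Eu0a1.
    by move: sUB; rewrite /Uvs /= ab.
  apply: (prbg [:: inl a1, inr v0, inl b1 & B] _ a1 a2 Ea); first by rewrite /forward_path fB'.
  have u0a2 : v0 < a2 by move: sVA => /= /andP [].
  have a2uq : a2 <= uq.
    move: sVA; rewrite eUA => /sorted_last [_]; apply; rewrite -eUA /Vvs /= !in_cons eqxx.
    by rewrite orbT.
  left; exists a1, v0, uq; split => //.
  + by apply: sorted_head; move: fB'; rewrite fwdE => /and3P [].
  + by move: (sorted_head sVB).
  + rewrite /maxV; have -> : Vvs [:: inl a1, inr v0, inl b1 & B] = Vvs [:: inr v0, inl b1 & B] by [].
    by rewrite eUB; apply: sorted_last; rewrite -eUB.
  + split; first by rewrite a2uq ltnW.
    by exists v0; split => //; exists 1.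
Qed.
End G3.

Section G4.
Variables (m n : nat) (E : 'I_m -> 'I_n -> bool).

Lemma fwd_tail (p a : vert m n) s : forward_dir E true [:: p, a & s] -> 0 < size s ->
  forward_dir E true (a :: s).
Proof.
rewrite !fwdE => /and3P [pp su sv] hs; apply/and3P; split.
- by move: pp; rewrite /is_path /= hs => /andP [_ ->].
- by clear pp sv; case: p su => [u|v] //= /path_sorted.
- by clear pp su; case: p sv => [u|v] //= /path_sorted.
Qed.

Lemma fwd_last_neq (x : vert m n) s : forward_dir E true (x :: s) -> last x s != x.
Proof.
rewrite fwdE => /and3P [pp su sv]; case/lastP: s pp su sv => [//|s l] _.
rewrite last_rcons; case: (eqVneq l x) => [->|//].
case: x => [u|v].
- rewrite /= UvsR => /(path_min_gen (@ltr_trans m)) /(_ u).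
  by rewrite mem_rcons mem_head ltnn => /(_ isT).
- rewrite /= VvsR => _ /(path_min_gen (@ltr_trans n)) /(_ v).
  by rewrite mem_rcons mem_head ltnn => /(_ isT).
Qed.

Lemma diverge (p a b : vert m n) A B : PRBG E ->
  forward_dir E true [:: p, a & A] -> forward_dir E true [:: p, b & B] -> a != b ->
  last a A = last b B -> False.
Proof.
move=> prbg fA fB ab eql.
have := fA; rewrite fwdE => /and3P [pA _ _].
have := fB; rewrite fwdE => /and3P [pB _ _].
case: p a b fA fB pA pB ab eql => [u0|v0] [a1|a1] [b1|b1] fA fB pA pB ab eql;
  try by move: pA => /=; rewrite ?andbF.
all: try by move: pB => /=; rewrite ?andbF.
- case: (ltngtP a1 b1) => h.
  + exact: (divU prbg fA fB h eql).
  + exact: (divU prbg fB fA h (esym eql)).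
  + by move: ab; rewrite (val_inj h) eqxx.
- case: (ltngtP a1 b1) => h.
  + exact: (divV prbg fA fB h eql).
  + exact: (divV prbg fB fA h (esym eql)).
  + by move: ab; rewrite (val_inj h) eqxx.
Qed.

Lemma core (A : seq (vert m n)) : PRBG E -> forall p B,
  forward_dir E true (p :: A) -> forward_dir E true (p :: B) -> last p A = last p B -> A = B.
Proof.
move=> prbg; elim: A => [|a A IH] p B fA fB eql.
  by move: fA; rewrite fwdE /is_path.
case: B fB eql => [|b B] fB eql.
  by move: fB; rewrite fwdE /is_path.
case: (eqVneq a b) => [eab|nab]; last first.
  by case: (diverge prbg fA fB nab eql).
subst b; congr (_ :: _).
case: A IH fA eql => [|a' A] IH fA eql; case: B fB eql => [|b' B] fB eql //.
- move: eql => /= eql; have := fwd_last_neq (fwd_tail fB isT); by rewrite /= -eql eqxx.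
- move: eql => /= eql; have := fwd_last_neq (fwd_tail fA isT); by rewrite /= eql eqxx.
- exact: (IH a _ (fwd_tail fA isT) (fwd_tail fB isT) eql).
Qed.

End G4.

Section G5.
Variables (m n : nat) (E : 'I_m -> 'I_n -> bool).

Lemma pmap_rev (A B : Type) (f : A -> option B) s : pmap f (rev s) = rev (pmap f s).
Proof.
elim: s => // a s IH; rewrite rev_cons -cats1 pmap_cat IH /=.
by case: (f a) => [b|] /=; rewrite ?cats0 // rev_cons cats1.
Qed.

Lemma adj_sym (a b : vert m n) : adj E a b = adj E b a.
Proof. by case: a b => [u|v] [u'|v']. Qed.

Lemma fwd_prefix inc (s t : seq (vert m n)) : forward_dir E inc (s ++ t) -> 1 < size s ->
  forward_dir E inc s.
Proof.
rewrite /forward_dir /Uvs /Vvs !pmap_cat.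
case: s => [//|x s] /andP [pp ss] hs.
apply/andP; split.
  by move: pp hs; rewrite /is_path /= cat_path => /andP [_ /andP [-> _]]; rewrite andbT.
by case: inc ss => /andP [/cat_sorted2 [? _] /cat_sorted2 [? _]]; apply/andP.
Qed.

Lemma fwd_rev (s : seq (vert m n)) : forward_dir E false s -> forward_dir E true (rev s).
Proof.
rewrite /forward_dir /Uvs /Vvs !pmap_rev !rev_sorted => /andP [pp ->]; rewrite andbT.
case: s pp => [//|x p]; rewrite /is_path => /andP [hs pp].
rewrite (lastI x p) rev_rcons size_rev size_belast hs /=.
rewrite rev_path; apply: etrans pp; apply: eq_path => a b; exact: adj_sym.
Qed.

End G5.

Theorem lemma4 (m n : nat) (E : 'I_m -> 'I_n -> bool) :
  PRBG E ->
  forall (x y : vert m n) (P1 P2 : seq (vert m n)) (inc : bool),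
    forward_dir E inc (x :: P1) -> forward_dir E inc (x :: P2) ->
    y != x -> y \in x :: P1 -> y \in x :: P2 ->
    take (index y (x :: P1)).+1 (x :: P1) = take (index y (x :: P2)).+1 (x :: P2).
Proof.
move=> prbg x y P1 P2 inc f1 f2 yx.
rewrite !in_cons (negbTE yx) /= => y1 y2.
rewrite eq_sym (negbTE yx).
have pre : forall P, forward_dir E inc (x :: P) -> y \in P ->
    take (index y P).+1 P = rcons (take (index y P) P) y /\
    forward_dir E inc (x :: rcons (take (index y P) P) y).
  move=> P fP yP.
  have e : take (index y P).+1 P = rcons (take (index y P) P) y.
    by rewrite (take_nth y) ?index_mem // nth_index.
  split => //; apply: (fwd_prefix (t := drop (index y P).+1 P)); last by rewrite /= size_rcons.
  by rewrite cat_cons -e cat_take_drop.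
have [e1 g1] := pre _ f1 y1; have [e2 g2] := pre _ f2 y2.
rewrite /= e1 e2; congr (_ :: _).
set t1 := take (index y P1) P1 in g1 *; set t2 := take (index y P2) P2 in g2 *.
case: inc {f1 f2 pre e1 e2} g1 g2 => g1 g2.
- by apply: (core prbg g1 g2); rewrite !last_rcons.
- have h1 := fwd_rev g1; have h2 := fwd_rev g2.
  rewrite -rcons_cons rev_rcons in h1; rewrite -rcons_cons rev_rcons in h2.
  have := core prbg h1 h2; rewrite !rev_cons !last_rcons => /(_ erefl) /rcons_inj [/(congr1 rev)]; rewrite !revK => ->.
  by [].
Qed.
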